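(* Let $\mathcal A(x,m)=\{\mu\in\mathcal P(\mathcal X):\mu\ll m\}$ (the dual sets of the worst-case mapping $\sigma(x,m,v)=\max_{y:m(y)>0}v(y)$). Then the associated risk multikernel $\mathfrak M$ is not semi-differentiable at $\mathcal I$ in any direction $K\in\mathcal T_{\mathcal Q}(\mathcal I)$ with $K\ne0$.
   Context: $\mathcal X$ is a finite set, $\mathcal P(\mathcal X)$ the probability measures on $\mathcal X$, $\mathcal S$ the vector space of signed kernels $K:\mathcal X\to\mathcal M(\mathcal X)$, written $K(y|x)$, with norm $\|K\|=\sup\{\sum_{y}\varphi(y)K(y|x):x\in\mathcal X,\ -1\le\varphi\le1\}$; $\mathcal Q\subset\mathcal S$ the stochastic kernels; $\mathcal I(x)=\delta_x$. $\mathrm d(K,B)=\inf_{M\in B}\|K-M\|$ ($=+\infty$ if $B=\emptyset$), and $\mathrm{dist}(\mathcal S_1,\mathcal S_2)=\max(\sup_{K\in\mathcal S_1}\mathrm d(K,\mathcal S_2),\sup_{K\in\mathcal S_2}\mathrm d(K,\mathcal S_1))$. The tangent cone is $\mathcal T_{\mathcal Q}(\mathcal I)=\{K\in\mathcal S:\lim_{\tau\downarrow0}\mathrm d(K,\frac1\tau(\mathcal Q-\mathcal I))=0\}$. The risk multikernel associated with $\mathcal A$ is $\mathfrak M(Q)=\{M\in\mathcal Q: M(x)\in\mathcal A(x,Q(x))\ \forall x\}$. $\mathfrak M$ is semi-differentiable at $\mathcal I$ in direction $K\in\mathcal T_{\mathcal Q}(\mathcal I)$ if there is a nonempty set $\mathfrak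 D(K)\subset\mathcal S$ such that for every $\varepsilon_n\downarrow0$ and every $K_n\to K$ with $K_n\in\mathcal T_{\mathcal Q}(\mathcal I)$, $\lim_{n}\mathrm{dist}\big(\frac1{\varepsilon_n}[\mathfrak M(\mathcal I+\varepsilon_nK_n)-\mathcal I],\mathfrak D(K)\big)=0$. *)

(* Defs.v *)
From mathcomp Require Import ssreflect ssrfun ssrbool eqtype ssrnat seq fintype bigop.
From Stdlib Require Import Reals.
Open Scope R_scope.

Set Implicit Arguments.
Unset Strict Implicit.

Section Kernels.
Variable X : finType.

(* A signed kernel K : X -> M(X); we write  K x y  for  K(y|x). *)
Definition kernel := X -> X -> R.

Definition rsum (f : X -> R) : R := \big[Rplus/0]_(y : X) f y.

Definition kzero : kernel := fun _ _ => 0.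
Definition kadd (K M : kernel) : kernel := fun x y => K x y + M x y.
Definition ksub (K M : kernel) : kernel := fun x y => K x y - M x y.
Definition kscale (c : R) (K : kernel) : kernel := fun x y => c * K x y.

Definition kid : kernel := fun x y => if x == y then 1 else 0.

Definition norm_le (K : kernel) (r : R) : Prop :=
  forall (x : X) (phi : X -> R), (forall y, -1 <= phi y <= 1) ->
    rsum (fun y => phi y * K x y) <= r.

Definition is_prob (mu : X -> R) : Prop := (forall y, 0 <= mu y) /\ rsum mu = 1.

Definition stochastic (K : kernel) : Prop := forall x, is_prob (K x).

Definition tangent (K : kernel) : Prop :=
  forall eps, 0 < eps -> exists delta, 0 < delta /\
    forall tau, 0 < tau < delta ->
      exists M, stochastic M /\ norm_le (ksub K (kscale (/ tau) (ksub M kid))) eps.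

Definition Aset (x : X) (m : X -> R) (mu : X -> R) : Prop :=
  is_prob mu /\ (forall y, m y = 0 -> mu y = 0).

Definition riskM (Q : kernel) (M : kernel) : Prop :=
  stochastic M /\ forall x, Aset x (Q x) (M x).

Definition diff_quot (eps : R) (K' : kernel) (N : kernel) : Prop :=
  exists M, riskM (kadd kid (kscale eps K')) M /\ N = kscale (/ eps) (ksub M kid).

(* lim_n dist(S n, D) = 0, with dist the Hausdorff distance (d(K, empty) = +oo) *)
Definition dist_to0 (S : nat -> kernel -> Prop) (D : kernel -> Prop) : Prop :=
  forall eps, 0 < eps -> exists N, forall n, (N <= n)%nat ->
    (forall K, S n K -> exists M, D M /\ norm_le (ksub K M) eps) /\
    (forall M, D M -> exists K, S n K /\ norm_le (ksub M K) eps).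

Definition seq_down0 (e : nat -> R) : Prop :=
  (forall n, 0 < e n) /\ (forall n, e (S n) <= e n) /\
  (forall eps, 0 < eps -> exists N, forall n, (N <= n)%nat -> e n <= eps).

Definition kconv (Kn : nat -> kernel) (K : kernel) : Prop :=
  forall eps, 0 < eps -> exists N, forall n, (N <= n)%nat -> norm_le (ksub (Kn n) K) eps.

Definition semi_diff (K : kernel) : Prop :=
  exists D : kernel -> Prop, (exists M, D M) /\
    forall (e : nat -> R) (Kn : nat -> kernel),
      seq_down0 e -> (forall n, tangent (Kn n)) -> kconv Kn K ->
      dist_to0 (fun n => diff_quot (e n) (Kn n)) D.

End Kernels.

(* Main.v *)
Require Import Defs.
From HB Require Import structures.
From mathcomp Require Import ssreflect ssrfun ssrbool eqtype ssrnat seq fintype bigop.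
From Stdlib Require Import Reals Lra Lia ZArith Classical FunctionalExtensionality.
Open Scope R_scope.
HB.instance Definition _ := Monoid.isComLaw.Build R 0 Rplus (fun a b c => esym (Rplus_assoc a b c)) Rplus_comm Rplus_0_l.
Section S. Variable X : finType.
Implicit Types (f g : X -> R).
Lemma rsum_plus (f g : X -> R) : rsum (fun z => f z + g z) = rsum f + rsum g.
Proof. by rewrite /rsum big_split. Qed.
Lemma rsum_scal c (f : X -> R) : rsum (fun z => c * f z) = c * rsum f.
Proof. rewrite /rsum; elim: (index_enum X) => [|a l IH]; rewrite ?big_nil ?big_cons; lra. Qed.
Lemma rsum_le (f g : X -> R) : (forall z, f z <= g z) -> rsum f <= rsum g.
Proof. move=> H; rewrite /rsum; elim: (index_enum X) => [|a l IH]; rewrite ?big_nil ?big_cons; [lra| have := H a; lra]. Qed.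
Lemma rsum_delta (a : X) c : rsum (fun z => if a == z then c else 0) = c.
Proof. rewrite /rsum (bigD1 a) //= eqxx big1 => [|z /negbTE]; first lra. by rewrite eq_sym => ->. Qed.
Lemma rsum_ge (f : X -> R) a : (forall z, 0 <= f z) -> f a <= rsum f.
Proof. move=> H; rewrite /rsum (bigD1 a) //=.
have : 0 <= \big[Rplus/0]_(i | i != a) f i.
  elim/big_rec: _ => [|i s _ Hs]; [lra | have := H i; lra].
lra. Qed.
Lemma bound (f : X -> R) : exists B, 0 <= B /\ forall z, Rabs (f z) <= B.
Proof.
suff [B [HB1 HB2]] : exists B, 0 <= B /\ forall z, z \in enum X -> Rabs (f z) <= B.
  exists B; split => // z; apply: HB2; by rewrite mem_enum.
elim: (enum X) => [|a l [B [HB HB2]]]; first by exists 0; split; [lra|].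
exists (Rmax B (Rabs (f a))); split; first by apply: Rle_trans (Rmax_l _ _).
move=> z; rewrite in_cons => /orP [/eqP ->|Hz]; first by apply Rmax_r.
apply: Rle_trans (Rmax_l _ _); auto.
Qed.
Lemma offdiag (K : kernel X) : tangent K -> K <> @kzero X ->
  exists x y, x <> y /\ K x y <> 0.
Proof.
move=> HT HK; apply: NNPP => Hn.
have Hoff : forall x y, x <> y -> K x y = 0.
  move=> x y Hxy; apply: NNPP => H; apply: Hn; by exists x, y.
have [x0 Hx0] : exists x, K x x <> 0.
  apply: NNPP => H; apply: HK; apply: functional_extensionality => x.
  apply: functional_extensionality => y; rewrite /kzero.
  case: (eqVneq x y) => [->|/eqP Hxy]; last exact: Hoff.
  apply: NNPP => H'; apply: H; by exists y.
have Hrow : rsum (K x0) = K x0 x0.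
  rewrite -(rsum_delta x0 (K x0 x0)); congr rsum; apply: functional_extensionality => z.
  case: (eqVneq x0 z) => [->//|/eqP ?]; exact: Hoff.
set c := K x0 x0 in Hx0 Hrow.
have Hc : 0 < Rabs c / 2 by have := Rabs_pos_lt _ Hx0; lra.
have [d [Hd Htau]] := HT _ Hc.
have [M [HM HN]] := Htau (d/2) ltac:(lra).
have Hcomp : forall a : R, rsum (fun y => a * ksub K (kscale (/ (d/2)) (ksub M (@kid X))) x0 y) = a * c.
  move=> a; rewrite rsum_scal; congr (_ * _).
  rewrite /ksub /kscale.
  have -> : (fun y => K x0 y - / (d/2) * (M x0 y - kid x0 y)) =
     (fun y => K x0 y + (- / (d/2)) * (M x0 y + (-1) * kid x0 y)).
    apply: functional_extensionality => y; ring.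
  rewrite rsum_plus rsum_scal rsum_plus rsum_scal Hrow.
  have [_ HM1] := HM x0; rewrite HM1.
  have -> : rsum (kid x0) = 1 by rewrite -(rsum_delta x0 1).
  ring.
have H1 := HN x0 (fun _ => 1) ltac:(move=> y; lra).
have H2 := HN x0 (fun _ => -1) ltac:(move=> y; lra).
rewrite Hcomp in H1; rewrite Hcomp in H2.
move: H1 H2; rewrite /Rabs; case: Rcase_abs; lra.
Qed.
End S.

Theorem mainTheorem11 (X : finType) (K : kernel X) :
  tangent K -> K <> @kzero X -> ~ semi_diff K.
Proof.
move=> HT HK [D [_ HD]].
have [x [y [Hxy Kxy]]] := offdiag _ _ HT HK.
have [B [HB0 HB]] := bound _ (fun z => K z z).
set e := fun n : nat => / ((INR n + 1) * (B + 1)).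
have Hpos : forall n, 0 < (INR n + 1) * (B + 1).
  move=> n; have := pos_INR n; nra.
have He : forall n, / e n = (INR n + 1) * (B + 1).
  move=> n; rewrite /e Rinv_inv //.
have Hepos : forall n, 0 < e n by move=> n; apply: Rinv_0_lt_compat.
have Hsd : seq_down0 e.
  split => //; split.
    move=> n; rewrite /e; apply: Rinv_le_contravar => //.
    rewrite S_INR; have := pos_INR n; nra.
  move=> eps Heps.
  have [N HN] : exists N : nat, / eps <= INR N.
    have [Hu _] := archimed (/ eps).
    exists (Z.to_nat (up (/ eps))).
    rewrite INR_IZR_INZ Z2Nat.id; first lra.
    apply: le_IZR; have := Rinv_0_lt_compat _ Heps; lra.
  exists N => n Hn.
  have HnN : INR N <= INR n by apply: le_INR; apply/leP.
  rewrite /e -(Rinv_inv eps); apply: Rinv_le_contravar.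
    by apply: Rinv_0_lt_compat.
  have := pos_INR n; nra.
have Hkc : kconv (fun _ => K) K.
  move=> eps Heps; exists 0%nat => n _ z phi _.
  rewrite /ksub.
  have -> : (fun y0 => phi y0 * (K z y0 - K z y0)) = (fun y0 => 0 * phi y0).
    apply: functional_extensionality => w; ring.
  rewrite rsum_scal; lra.
have [N HN] := HD e (fun _ => K) Hsd (fun _ => HT) Hkc 1 Rlt_0_1.
set n := (2 * N + 4)%nat.
have [HS _] := HN n ltac:(by rewrite /n mul2n -addnn -addnA leq_addr).
have [_ HS'] := HN N (leqnn N).
set Mx : kernel X := fun z w => if z == x then (if y == w then 1 else 0) else kid z w.
set s : kernel X := kscale (/ e n) (ksub Mx (@kid X)).
have Hdelta : forall a : X, is_prob (fun w => if a == w then 1 else 0).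
  move=> a; split; first by move=> w; case: (a == w); lra.
  exact: (rsum_delta _ a 1).
have Hs : diff_quot (e n) K s.
  exists Mx; split => //; split.
    move=> z; rewrite /Mx; case: (z == x); first exact: Hdelta.
    exact: Hdelta.
  move=> z; split.
    rewrite /Mx; case: (z == x); first exact: Hdelta.
    exact: Hdelta.
  move=> w; rewrite /kadd /kscale /Mx /kid.
  case: (eqVneq z x) => [->|Hzx].
    case: (eqVneq y w) => [<-|//].
    have -> : (x == y) = false by apply/eqP.
    move=> H; exfalso; apply: Kxy.
    have := Hepos n; move: H; rewrite Rplus_0_l => /Rmult_integral [H|//]; lra.
  case: (eqVneq z w) => [<-|//] H; exfalso.
  have HBz := HB z; have Hen := Hepos n.
  have Hi : e n * ((INR n + 1) * (B + 1)) = 1 by rewrite -He Rinv_r //; lra.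
  have Hn0 := pos_INR n.
  have Hlt : e n * (B + 1) <= 1 by nra.
  have Hab : e n * Rabs (K z z) <= e n * B by apply: Rmult_le_compat_l; lra.
  move: H Hab; rewrite /Rabs; case: Rcase_abs => Hk; nra.
have [d [Hd Hsd1]] := HS s Hs.
have [s' [[M' [[HM'1 _] ->]] Hd2]] := HS' d Hd.
set phi := fun z : X => if z == y then 1 else if z == x then -1 else 0.
have Hphi : forall z, -1 <= phi z <= 1.
  move=> z; rewrite /phi; case: (z == y); first lra; case: (z == x); lra.
have A1 := Hsd1 x phi Hphi.
have A2 := Hd2 x phi Hphi.
have A3 : rsum (fun z => phi z * kscale (/ e N) (ksub M' (@kid X)) x z) <= 2 * / e N.
  apply: (Rle_trans _ (rsum (fun z => / e N * (M' x z + kid x z)))); first apply: rsum_le.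
    move=> z; rewrite /kscale /ksub.
    have := Hphi z; have := (proj1 (HM'1 x)) z.
    have : 0 <= kid x z by rewrite /kid; case: (x == z); lra.
    have := Rinv_0_lt_compat _ (Hepos N).
    move: (phi z) (M' x z) (kid x z) (/ e N) => p m k i Hi Hk Hm Hp.
    have h1 : 0 <= (1 - p) * (i * m) by apply: Rmult_le_pos; nra.
    have h2 : 0 <= (1 + p) * (i * k) by apply: Rmult_le_pos; nra.
    nra.
  rewrite rsum_scal rsum_plus (proj2 (HM'1 x)).
  have -> : rsum (kid x) = 1 by rewrite -(rsum_delta _ x 1).
  have := Rinv_0_lt_compat _ (Hepos N); lra.
have A4 : / e n <= rsum (fun z => phi z * s x z).
  have -> : / e n = phi y * s x y.
    rewrite /phi /s /kscale /ksub /Mx /kid eqxx eqxx.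
    have -> : (x == y) = false by apply/eqP.
    ring.
  apply: (rsum_ge _ (fun z => phi z * s x z) y).
  move=> z; rewrite /phi /s /kscale /ksub /Mx /kid eqxx.
  have := Rinv_0_lt_compat _ (Hepos n).
  case: (eqVneq z y) => [->|Hzy].
    have -> : (x == y) = false by apply/eqP.
    move=> ?; nra.
  case: ifP => [/eqP Ezx|Hzx]; first by rewrite Ezx eqxx => ?; nra.
  move=> ?; nra.
have Hsplit : rsum (fun z => phi z * s x z) =
   rsum (fun z => phi z * ksub s d x z) + rsum (fun z => phi z * ksub d (kscale (/ e N) (ksub M' (@kid X))) x z)
   + rsum (fun z => phi z * kscale (/ e N) (ksub M' (@kid X)) x z).
  rewrite -!rsum_plus; congr rsum; apply: functional_extensionality => z.
  rewrite /ksub; ring.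
have : / e n <= 2 + 2 * / e N by lra.
rewrite !He /n.
have -> : INR (2 * N + 4) = 2 * INR N + 4 by rewrite plus_INR mult_INR; simpl; ring.
have := pos_INR N; nra.
Qed.
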